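(* Let $T=(V,E)$ be a tree on $n$ vertices, let $f=\{i,j\}$ be a pair of vertices with $d_{i,j}=d>1$, let $B=E\cup\{f\}$, and let $N=\mathrm{Min4PC}_T[B,B]$. Then $N$ has $n-1$ negative eigenvalues and exactly one positive eigenvalue.
   Context: $d_{i,j}$ is the distance in $T$ between vertices $i,j$; $\mathcal{V}_2$ is the set of 2-element subsets of $V$ (edges regarded as elements of $\mathcal{V}_2$). $\mathrm{Min4PC}_T$ is the $\binom n2\times\binom n2$ matrix indexed by $\mathcal{V}_2$ whose entry in row $\{i,j\}$, column $\{k,l\}$ is $\min\{d_{i,l}+d_{j,k},\ d_{i,k}+d_{j,l},\ d_{i,j}+d_{k,l}\}$. $M[B,B]$ denotes the principal submatrix with rows and columns indexed by $B$. *)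

(* Defs.v *)
From HB Require Import structures.
From mathcomp Require Import all_boot all_order all_algebra.
From mathcomp Require Import reals.
Set Implicit Arguments. Unset Strict Implicit. Unset Printing Implicit Defensive.
Import Order.TTheory GRing.Theory Num.Theory.

Section Defs.
Variable V : finType.
Variable adj : rel V.

Definition edges : {set {set V}} :=
  [set [set x; y] | x in V, y in V & adj x y].

Definition is_tree : Prop :=
  symmetric adj /\ irreflexive adj /\ (forall x y, connect adj x y)
  /\ #|edges| = #|V| - 1.

Definition walkb (k : nat) (x y : V) : bool :=
  [exists s : k.-tuple V, path adj x s && (last x s == y)].

(* graph distance: least k with a walk of length k from x to y
   (in a connected graph this is < #|V|, so the search range suffices) *)
Definition dist (x y : V) : nat :=
  find (fun k => walkb k x y) (iota 0 #|V|).

Definition min4pc_entry (i j k l : V) : nat :=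
  minn (dist i l + dist j k) (minn (dist i k + dist j l) (dist i j + dist k l)).

(* Min4PC entry for rows/columns indexed by 2-subsets p = {i,j}, q = {k,l};
   the value does not depend on the order chosen for the elements
   (x0 is only a default for nth and is irrelevant on 2-sets). *)
Definition Min4PC (x0 : V) (p q : {set V}) : nat :=
  let i := nth x0 (enum p) 0 in let j := nth x0 (enum p) 1 in
  let k := nth x0 (enum q) 0 in let l := nth x0 (enum q) 1 in
  min4pc_entry i j k l.

End Defs.

(* s is the multiset of eigenvalues (roots of the characteristic polynomial,
   with multiplicity) of the square matrix A *)
Definition eigenvalues_are (R : comNzRingType) (m : nat) (A : 'M[R]_m) (s : seq R) :=
  (char_poly A = \prod_(x <- s) ('X - x%:P))%R.

Definition Min4PC_sub (R : realType) (V : finType) (adj : rel V) (x0 : V)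
  (B : {set {set V}}) : 'M[R]_#|B| :=
  \matrix_(a < #|B|, b < #|B|) (Min4PC adj x0 (enum_val a) (enum_val b))%:R%R.

(* Main.v *)
Require Import Defs.
From HB Require Import structures.
From mathcomp Require Import all_boot all_order all_algebra.
From mathcomp Require Import reals.
From mathcomp Require Import ring lra zify.
Import Order.TTheory GRing.Theory Num.Theory.
Local Open Scope ring_scope.
Lemma det3 (R : comNzRingType) (g : nat -> nat -> R) :
  \det (\matrix_(i < 3, j < 3) g i j) =
  g 0 0 * (g 1 1 * g 2 2 - g 1 2 * g 2 1)
  - g 0 1 * (g 1 0 * g 2 2 - g 1 2 * g 2 0)
  + g 0 2 * (g 1 0 * g 2 1 - g 1 1 * g 2 0).
Proof.
rewrite (expand_det_row _ 0) !big_ord_recl big_ord0 /cofactor.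
rewrite !(expand_det_row _ 0) !big_ord_recl !big_ord0 /cofactor !det_mx11 !mxE /bump /=.
rewrite !expr0 !exprS !expr0; ring.
Qed.

Lemma sylv_det (R : comNzRingType) n k (U : 'M[R]_(n,k)) (W : 'M[R]_(k,n)) :
  \det (1%:M - U *m W) = \det (1%:M - W *m U).
Proof.
have E1 : block_mx 1%:M 0 W 1%:M *m block_mx 1%:M U 0 (1%:M - W *m U)
          = block_mx 1%:M U W 1%:M.
  rewrite mulmx_block !mul1mx ?mul0mx ?mulmx0 ?mulmx1 ?addr0 ?add0r.
  by rewrite addrC subrK.
have E2 : block_mx 1%:M U 0 1%:M *m block_mx (1%:M - U *m W) 0 W 1%:M
          = block_mx 1%:M U W 1%:M.
  rewrite mulmx_block !mul1mx ?mul0mx ?mulmx0 ?mulmx1 ?addr0 ?add0r.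
  by rewrite subrK.
have := congr1 determinant E1; rewrite -E2 !det_mulmx det_lblock det_ublock.
by rewrite det_ublock det_lblock !det1 !mul1r mulr1.
Qed.

Lemma char_poly_horner (R : comNzRingType) n (A : 'M[R]_n) (x : R) :
  (char_poly A).[x] = \det (x%:M - A).
Proof.
rewrite /char_poly -[_.[x]]/(horner_eval x _) -det_map_mx; congr (\det _).
apply/matrixP => i j; rewrite !mxE /horner_eval.
by case: (i == j); rewrite /= ?mulr1n ?mulr0n horner_evalE !hornerE.
Qed.

Ltac fld := rewrite ?subrr ?subr0 ?mul0r ?mulr0 ?mulr1 ?mul1r ?add0r ?addr0; first [done | (field; done) | ring].
Section Mat.
Variable R : fieldType.
Variable n : nat.
Variable f0 : 'I_n.
Variable v : 'I_n -> R.
Hypothesis hv : v f0 = 0.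

Definition chi a : R := if a == f0 then 0 else 1.
Definition ef a : R := if a == f0 then 1 else 0.
Definition uu (c : nat) a := if c == 0%N then chi a else if c == 1%N then ef a else v a.
Definition ww (c : nat) a := if c == 0%N then 2 * chi a else if c == 1%N then v a else ef a.
Definition NN : 'M[R]_n :=
  \matrix_(a,b) (if a == b then 0 else if a == f0 then v b else if b == f0 then v a else 2).

Lemma decomp x : x%:M - NN =
  diag_mx (\row_a (if a == f0 then x else x + 2)) -
  (\matrix_(a < n, c < 3) uu c a) *m (\matrix_(c < 3, b < n) ww c b).
Proof.
apply/matrixP => a b; rewrite !mxE !big_ord_recl big_ord0 !mxE /bump /=.
rewrite /uu /ww /chi /ef /=.
case: (eqVneq a b) => [<-|ab].
  rewrite ?eqxx /=; case: (eqVneq a f0) => [->|af]; rewrite ?eqxx ?hv ?(negbTE af); ring.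
have H0 : forall y : R, y *+ false = 0 := fun y => mulr0n y.
rewrite !H0.
case: (eqVneq a f0) => [af|af]; case: (eqVneq b f0) => [bf|bf].
- by move: ab; rewrite af bf eqxx.
- rewrite af ?eqxx; ring.
- rewrite bf ?eqxx; ring.
- ring.
Qed.
End Mat.
Section Mat2.
Variable R : fieldType.
Variable n : nat.
Variable f0 : 'I_n.
Variable v : 'I_n -> R.
Hypothesis hv : v f0 = 0.
Lemma prod_dd (x : R) : \prod_a (if a == f0 then x else x + 2) = x * (x + 2) ^+ n.-1.
Proof.
rewrite (bigD1 f0) //= eqxx; congr (_ * _).
rewrite (eq_bigr (fun _ => x + 2)); last by move=> a /negbTE ->.
by rewrite prodr_const cardC1 card_ord.
Qed.
Lemma sum_ef : \sum_a @ef R n f0 a = 1 :> R.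
Proof.
rewrite (bigD1 f0) //= /ef eqxx big1 ?addr0 // => a /negbTE -> //.
Qed.
Lemma sum_1 : \sum_(a : 'I_n) 1 = n%:R :> R.
Proof. by rewrite sumr_const card_ord. Qed.

Local Notation chi := (@chi R n f0).
Local Notation ef := (@ef R n f0).
Local Notation uu := (@uu R n f0 v).
Local Notation ww := (@ww R n f0 v).
Local Notation NN := (@NN R n f0 v).

Lemma det_NN (x : R) : x != 0 -> x + 2 != 0 ->
  \det (x%:M - NN) = x * (x + 2) ^+ n.-1 *
   ((1 - 2 / (x + 2) * (n%:R - 1)) * (1 - (\sum_a v a ^+ 2) / (x + 2) * (1 / x))
    + (- (2 / (x + 2) * \sum_a v a)) * ((\sum_a v a) / (x + 2) * (1 / x))).
Proof.
move=> x0 x2.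
set dd := fun a => if a == f0 then x else x + 2.
have dd0 : forall a, dd a != 0 by move=> a; rewrite /dd; case: (a == f0).
rewrite (@decomp R n f0 v hv).
set U := \matrix_(a < n, c < 3) uu c a.
set W := \matrix_(c < 3, b < n) ww c b.
set U' := \matrix_(a < n, c < 3) (uu c a / dd a).
have -> : diag_mx (\row_a dd a) - U *m W = diag_mx (\row_a dd a) *m (1%:M - U' *m W).
  rewrite mulmxBr mulmx1 mulmxA; congr (_ - _ *m _).
  apply/matrixP => a c; rewrite mul_diag_mx !mxE mulrC divfK //.
rewrite det_mulmx det_diag.
rewrite (eq_bigr (fun a => dd a)); last by move=> a _; rewrite mxE.
rewrite prod_dd sylv_det; congr (_ * _).
have -> : 1%:M - W *m U' = \matrix_(i < 3, j < 3)
   ((i == j :> nat)%:R - \sum_a ww i a * (uu j a / dd a)).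
  by apply/matrixP => i j; rewrite !mxE; congr (_ - _); apply: eq_bigr => a _; rewrite !mxE.
rewrite (@det3 _ (fun i j => (i == j)%:R - \sum_a ww i a * (uu j a / dd a))) /= /uu /ww /=.
have S00 : \sum_a 2 * chi a * (chi a / dd a) = 2 / (x + 2) * (n%:R - 1).
  rewrite (eq_bigr (fun a => 2 / (x + 2) * (1 - ef a))).
    by rewrite -mulr_sumr sumrB sum_1 sum_ef.
  by move=> a _; rewrite /chi /ef /dd; case: (a == f0); fld.
have S01 : \sum_a 2 * chi a * (ef a / dd a) = 0.
  by rewrite big1 // => a _; rewrite /chi /ef /dd; case: (a == f0); fld.
have S02 : \sum_a 2 * chi a * (v a / dd a) = 2 / (x + 2) * \sum_a v a.
  rewrite mulr_sumr; apply: eq_bigr => a _; rewrite /chi /dd.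
  by case: eqP => [->|_]; rewrite ?hv; fld.
have S10 : \sum_a v a * (chi a / dd a) = (\sum_a v a) / (x + 2).
  rewrite mulr_suml; apply: eq_bigr => a _; rewrite /chi /dd.
  by case: eqP => [->|_]; rewrite ?hv; fld.
have S11 : \sum_a v a * (ef a / dd a) = 0.
  by rewrite big1 // => a _; rewrite /ef /dd; case: eqP => [->|_]; rewrite ?hv; fld.
have S12 : \sum_a v a * (v a / dd a) = (\sum_a v a ^+ 2) / (x + 2).
  rewrite mulr_suml; apply: eq_bigr => a _; rewrite /dd.
  by case: eqP => [->|_]; rewrite ?hv; fld.
have S20 : \sum_a ef a * (chi a / dd a) = 0.
  by rewrite big1 // => a _; rewrite /chi /ef /dd; case: (a == f0); fld.
have S21 : \sum_a ef a * (ef a / dd a) = 1 / x.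
  rewrite (eq_bigr (fun a => 1 / x * ef a)); first by rewrite -mulr_sumr sum_ef mulr1.
  by move=> a _; rewrite /ef /dd; case: (a == f0); fld.
have S22 : \sum_a ef a * (v a / dd a) = 0.
  by rewrite big1 // => a _; rewrite /ef /dd; case: eqP => [->|_]; rewrite ?hv; fld.
rewrite S00 S01 S02 S10 S11 S12 S20 S21 S22.
ring.
Qed.
End Mat2.

Lemma poly_eq_pos (R : numFieldType) (p q : {poly R}) :
  (forall x : R, 0 < x -> p.[x] = q.[x]) -> p = q.
Proof.
move=> H; apply/eqP; rewrite -subr_eq0; apply/eqP.
apply: (@roots_geq_poly_eq0 _ _ [seq (i.+1)%:R | i <- iota 0 (size (p - q))]).
- apply/allP => z /mapP [i _ ->]; rewrite /root hornerD hornerN H ?subrr //.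
- by rewrite map_inj_uniq ?iota_uniq // => a b /eqP; rewrite eqr_nat => /eqP [].
- by rewrite size_map size_iota.
Qed.

Lemma charNN (R : numFieldType) (k : nat) (f0 : 'I_k.+3) (v : 'I_k.+3 -> R) :
  v f0 = 0 ->
  let S := \sum_a v a in let W := \sum_a v a ^+ 2 in let M : R := (k.+2)%:R in
  char_poly (@NN R k.+3 f0 v) = ('X + 2%:P) ^+ k *
   (('X + 2%:P) * ('X + (2 - 2 * M)%:P) * 'X - W%:P * ('X + (2 - 2 * M)%:P) - (2 * S ^+ 2)%:P).
Proof.
move=> hv S W M; apply: poly_eq_pos => x x0.
have x0' : x != 0 by rewrite gt_eqF.
have x2 : x + 2 != 0 by rewrite gt_eqF // addr_gt0.
rewrite char_poly_horner (@det_NN R k.+3 f0 v hv x x0' x2).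
rewrite -/S -/W (_ : (k.+3)%:R - 1 = M); last by rewrite /M !mulrS; ring.
have -> : (x + 2) ^+ (k.+3).-1 = (x + 2) ^+ k * (x + 2) ^+ 2 by rewrite -exprD addn2.
rewrite !(hornerM, hornerD, hornerN, hornerX, hornerC, hornerXn, horner_exp).
by field; rewrite x0' x2.
Qed.


Lemma cubic (R : rcfType) (c W T : R) :
  let q := ('X + 2%:P) * ('X + c%:P) * 'X - W%:P * ('X + c%:P) - T%:P in
  0 <= q.[-2] -> q.[0] < 0 ->
  exists r1 r2 r3, [/\ r1 < 0, r2 < 0, 0 < r3 &
    q = ('X - r1%:P) * ('X - r2%:P) * ('X - r3%:P)].
Proof.
move=> q qm2 q0.
have qE : forall x, q.[x] = (x + 2) * (x + c) * x - W * (x + c) - T.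
  by move=> x; rewrite /q !hornerE.
set B := 1 + `|c| + `|W| + `|T|.
have qB : 0 <= q.[B].
  rewrite qE.
  have h1 : 1 <= B + c.
    rewrite /B; have := ler_norm (- c); rewrite normrN.
    have := normr_ge0 W; have := normr_ge0 T; lra.
  have h2 : 1 + `|T| <= (B + 2) * B - W.
    rewrite /B; have := ler_norm W; have := normr_ge0 c; have := normr_ge0 W;
    have := normr_ge0 T; nra.
  have := ler_norm T; have := normr_ge0 T; nra.
have B0 : 0 <= B by rewrite /B; have := normr_ge0 c; have := normr_ge0 W; have := normr_ge0 T; lra.
have [r3 /andP [r30 _] rq] := poly_ivt B0 (introT andP (conj (ltW q0) qB)).
have {}r30 : 0 < r3.
  rewrite lt_neqAle r30 andbT; apply/eqP => E; move: rq; rewrite /root -E.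
  by rewrite lt_eqF.
set al := 2 + c; set be := 2 * c - W; set ga := - (W * c + T).
set g := 'X^2 + (al + r3)%:P * 'X + (be + r3 * (al + r3))%:P.
have qg : q = g * ('X - r3%:P).
  have : q.[r3] = 0 by apply/eqP.
  rewrite qE => H.
  apply/eqP; rewrite -subr_eq0; apply/eqP.
  have -> : q - g * ('X - r3%:P) = ((r3 + 2) * (r3 + c) * r3 - W * (r3 + c) - T)%:P.
    by rewrite /q /g /al /be expr2; ring.
  by rewrite H.
have gE : forall x, g.[x] = x ^+ 2 + (al + r3) * x + (be + r3 * (al + r3)).
  by move=> x; rewrite /g !hornerE.
have gm2 : g.[-2] <= 0.
  have : q.[-2] = g.[-2] * (-2 - r3) by rewrite qg hornerM !hornerE.
  move=> E; rewrite E in qm2; nra.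
have g0 : 0 < g.[0].
  have : q.[0] = g.[0] * (0 - r3) by rewrite qg hornerM !hornerE.
  move=> E; rewrite E in q0; nra.
have m20 : -2 <= (0 : R) by lra.
have [r2 /andP [_ r20] rg] := poly_ivt m20 (introT andP (conj gm2 (ltW g0))).
have {}r20 : r2 < 0.
  rewrite lt_neqAle r20 andbT; apply/eqP => E; move: rg; rewrite /root E.
  by rewrite gt_eqF.
set r1 := - (al + r3) - r2.
have gr : g = ('X - r1%:P) * ('X - r2%:P).
  have : g.[r2] = 0 by apply/eqP.
  rewrite gE => H.
  apply/eqP; rewrite -subr_eq0; apply/eqP.
  have -> : g - ('X - r1%:P) * ('X - r2%:P) = (r2 ^+ 2 + (al + r3) * r2 + (be + r3 * (al + r3)))%:P.
    by rewrite /g /r1 expr2; ring.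
  by rewrite H.
have r10 : r1 < 0.
  have : g.[0] = r1 * r2 by rewrite gr !hornerE; ring.
  move=> E; rewrite E in g0; nra.
by exists r1, r2, r3; split => //; rewrite qg gr.
Qed.

Lemma charNN_gen (R : numFieldType) n (f0 : 'I_n) (v : 'I_n -> R) : (2 < n)%N -> v f0 = 0 ->
  char_poly (@NN R n f0 v) = ('X + 2%:P) ^+ (n - 3) *
   (('X + 2%:P) * ('X + (2 - 2 * (n.-1)%:R)%:P) * 'X
    - (\sum_a v a ^+ 2)%:P * ('X + (2 - 2 * (n.-1)%:R)%:P) - (2 * (\sum_a v a) ^+ 2)%:P).
Proof.
case: n f0 v => [|[|[|k]]] // f0 v _ hv.
by rewrite (@charNN R k f0 v hv) !subSS subn0.
Qed.

Local Close Scope ring_scope.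
Set Implicit Arguments. Unset Strict Implicit.

Section Tree.
Variable V : finType.
Variable adj : rel V.
Hypothesis sym : symmetric adj.
Hypothesis irr : irreflexive adj.
Hypothesis conn : forall x y, connect adj x y.
Hypothesis cardEd : #|edges adj| = #|V| - 1.

Local Notation D := (dist adj).

Lemma walkP k x y : reflect (exists s, [/\ size s = k, path adj x s & last x s = y])
  (walkb adj k x y).
Proof.
apply: (iffP existsP) => [[t /andP [p /eqP l]] | [s [sz p l]]].
  by exists (val t); rewrite size_tuple.
have st : size s == k by rewrite sz.
by exists (Tuple st); rewrite /= p l eqxx.
Qed.

Lemma walk_short x y : exists k, (k < #|V|)%N /\ walkb adj k x y.
Proof.
have /connectP [p Hp ->] := conn x y.
case/shortenP: Hp => p' Hp' Hu _.
exists (size p'); split; last by apply/walkP; exists p'.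
have := card_uniqP Hu; rewrite /= => Hc.
have := max_card (mem (x :: p')); rewrite Hc /=; lia.
Qed.

Lemma has_walk x y : has (fun k => walkb adj k x y) (iota 0 #|V|).
Proof.
have [k [lt w]] := walk_short x y.
by apply/hasP; exists k => //; rewrite mem_iota.
Qed.

Lemma dist_lt x y : (D x y < #|V|)%N.
Proof. by have := has_walk x y; rewrite has_find size_iota. Qed.

Lemma dist_walk x y : walkb adj (D x y) x y.
Proof.
have := nth_find 0 (has_walk x y); rewrite nth_iota ?add0n //.
exact: (dist_lt x y).
Qed.

Lemma dist_le k x y : walkb adj k x y -> (D x y <= k)%N.
Proof.
move=> w; case: (ltnP k #|V|) => hk; last by have := dist_lt x y; lia.
rewrite leqNgt; apply/negP => lt.
have := before_find 0 lt; rewrite nth_iota // add0n w //.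
Qed.

Lemma walk0 x y : walkb adj 0 x y -> x = y.
Proof. by case/walkP => s [sz p ls]; case: s sz p ls => //= _ _ <-. Qed.

Lemma walk_cat k l x y z : walkb adj k x y -> walkb adj l y z -> walkb adj (k + l) x z.
Proof.
case/walkP => s [sz p ls]; case/walkP => t [tz q lt].
apply/walkP; exists (s ++ t); rewrite size_cat cat_path last_cat ls sz tz p q.
by split.
Qed.

Lemma walk1 x y : adj x y -> walkb adj 1 x y.
Proof. by move=> a; apply/walkP; exists [:: y]; rewrite /= a. Qed.

Lemma walk_rev k x y : walkb adj k x y -> walkb adj k y x.
Proof.
case/walkP => s [sz p ls]; apply/walkP.
exists (rev (belast x s)); split.
- by rewrite size_rev size_belast.
- by rewrite -ls; move: p; rewrite rev_path (@eq_path _ _ adj) //.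
- by rewrite -ls; case: s {sz p ls} => [|z s] //=; rewrite rev_cons last_rcons.
Qed.


Lemma dist0 x : D x x = 0.
Proof. by apply/eqP; rewrite -leqn0; apply: dist_le; apply/walkP; exists [::]. Qed.

Lemma dist_eq0 x y : D x y = 0 -> x = y.
Proof. by move=> h; have := dist_walk x y; rewrite h => /walk0. Qed.

Lemma dist_sym x y : D x y = D y x.
Proof.
apply/eqP; rewrite eqn_leq !dist_le //; apply: walk_rev; exact: dist_walk.
Qed.

Lemma dist_tri x y z : (D x z <= D x y + D y z)%N.
Proof. by apply: dist_le; apply: walk_cat; apply: dist_walk. Qed.

Lemma dist_adj x y : adj x y -> D x y = 1.
Proof.
move=> a; apply/eqP; rewrite eqn_leq dist_le ?walk1 //=.
rewrite lt0n; apply/eqP => /dist_eq0 E; by move: a; rewrite E irr.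
Qed.

Lemma dist_step r x y : adj x y -> (D r y <= D r x + 1)%N.
Proof. by move=> a; rewrite -(dist_adj a) dist_tri. Qed.

Lemma parent_ex r y : y != r -> exists a, adj a y && ((D r a).+1 == D r y).
Proof.
move=> yr.
have := dist_walk r y; case/walkP => s [sz p ls].
case/lastP: s sz p ls => [|s z] sz p ls.
  by move: yr; rewrite -ls /= eqxx.
exists (last r s); rewrite size_rcons in sz; rewrite last_rcons in ls; subst z.
rewrite rcons_path in p; case/andP: p => p a; rewrite a /=.
have h1 : (D r (last r s) <= size s)%N by apply: dist_le; apply/walkP; exists s.
have h2 := dist_step r a.
apply/eqP; move: sz h1 h2; set A := D r (last r s); set B := D r y; move=> *; lia.
Qed.

Definition par r y := odflt y [pick a | adj a y && ((D r a).+1 == D r y)].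

Lemma par_spec r y : y != r -> adj (par r y) y /\ (D r (par r y)).+1 = D r y.
Proof.
move=> yr; rewrite /par; case: pickP => [a /andP [h1 /eqP h2] | H] //=.
have [a Ha] := parent_ex yr; by move: (H a); rewrite Ha.
Qed.

Lemma set2_eq (a b c e : V) : [set a; b] = [set c; e] ->
  (a = c /\ b = e) \/ (a = e /\ b = c).
Proof.
move=> E.
have ha : a \in [set c; e] by rewrite -E set21.
have hb : b \in [set c; e] by rewrite -E set22.
have hc : c \in [set a; b] by rewrite E set21.
have he : e \in [set a; b] by rewrite E set22.
move: ha hb hc he; rewrite !in_set2.
by move=> /orP[/eqP ? | /eqP ?] /orP[/eqP ? | /eqP ?] /orP[/eqP ? | /eqP ?] /orP[/eqP ? | /eqP ?]; subst; auto.
Qed.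

Lemma mem_edges x y : adj x y -> [set x; y] \in edges adj.
Proof. by move=> a; apply/imset2P; exists x y; rewrite ?inE. Qed.

Lemma edgesP e : e \in edges adj -> exists x y, adj x y /\ e = [set x; y].
Proof. by case/imset2P => x y _; rewrite inE => a ->; exists x, y. Qed.


Lemma edges_par r e : e \in edges adj -> exists2 x, x != r & e = [set x; par r x].
Proof.
set h := fun x => [set x; par r x].
have inj : {in [set~ r] &, injective h}.
  move=> x y; rewrite !inE => xr yr /set2_eq [[//]|[E1 E2]].
  have [_ d1] := par_spec xr; have [_ d2] := par_spec yr.
  by move: d1 d2; rewrite -E1 -E2 => <-; lia.
have sub : h @: [set~ r] \subset edges adj.
  apply/subsetP => e0 /imsetP [x]; rewrite !inE => xr ->.
  have [a _] := par_spec xr; rewrite /h setUC; exact: mem_edges.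
have ceq : h @: [set~ r] = edges adj.
  apply/eqP; rewrite eqEcard sub /= cardEd (card_in_imset inj) cardsC1; lia.
by rewrite -ceq => /imsetP [x]; rewrite !inE => xr ->; exists x.
Qed.

Lemma edge_par r a b : adj a b ->
  (b != r /\ a = par r b) \/ (a != r /\ b = par r a).
Proof.
move=> ab; have [x xr /set2_eq] := edges_par r (mem_edges ab).
by case=> [[-> ->]|[-> ->]]; [right|left].
Qed.

Lemma dist_edge r a b : adj a b -> D r b = (D r a).+1 \/ D r a = (D r b).+1.
Proof.
move=> ab; case: (edge_par r ab) => [[br E]|[ar E]].
  by have [_ <-] := par_spec br; rewrite E; left.
by have [_ <-] := par_spec ar; rewrite E; right.
Qed.

Lemma par_uniq r a b : adj a b -> b != r -> (D r a).+1 = D r b -> a = par r b.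
Proof.
move=> ab br E; case: (edge_par r ab) => [[_ ->]|[ar E2]] //.
have [_ E3] := par_spec ar; rewrite -E2 in E3; lia.
Qed.

Lemma walk_parity r k x y : walkb adj k x y -> odd (D r y) = odd (D r x) (+) odd k.
Proof.
case/walkP => s [sz p ls]; subst k y.
elim: s x p => [|z s IH] x /=; first by rewrite addbF.
case/andP => a p; rewrite IH //.
by case: (dist_edge r a) => ->; rewrite /= ?negbK; case: (odd _); case: (odd _).
Qed.

Lemma dist_parity r x y : odd (D x y) = odd (D r x) (+) odd (D r y).
Proof. by rewrite (walk_parity r (dist_walk x y)) addKb. Qed.


Lemma geo_uniq i j u : forall t x x', (t + u = D i j)%N -> D i x = t -> D i x' = t ->
  D x j = u -> D x' j = u -> x = x'.
Proof.
elim: u => [|u IH] t x x' tu dx dx' xj x'j.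
  by rewrite (dist_eq0 xj) (dist_eq0 x'j).
have xn : x != j by apply/eqP => E; move: xj; rewrite E dist0.
have x'n : x' != j by apply/eqP => E; move: x'j; rewrite E dist0.
have [c1 d1] := par_spec xn; have [c2 d2] := par_spec x'n.
rewrite (dist_sym x j) in xj; rewrite (dist_sym x' j) in x'j.
have key : forall y, y != j -> D j y = u.+1 -> D i y = t ->
    D i (par j y) = t.+1 /\ D (par j y) j = u.
  move=> y yn dy diy; have [cy dpy] := par_spec yn.
  rewrite sym in cy; have s1 := dist_step i cy.
  have s2 := dist_tri i (par j y) j.
  rewrite (dist_sym (par j y) j).
  rewrite (dist_sym (par j y) j) in s2.
  split; lia.
have [k1 k2] := key x xn xj dx; have [k3 k4] := key x' x'n x'j dx'.
have E := IH t.+1 (par j x) (par j x') ltac:(lia) k1 k3 k2 k4.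
have cn : par j x != i by apply/eqP => Ei; move: k1; rewrite Ei dist0.
rewrite sym in c1; rewrite sym in c2.
rewrite (par_uniq (r:=i) c1 cn); first rewrite (par_uniq (r:=i) c2); rewrite -?E //; lia.
Qed.

Local Notation E := (min4pc_entry adj).

Lemma entry_swap_l a b c e : E a b c e = E b a c e.
Proof. rewrite /min4pc_entry (dist_sym b a); lia. Qed.

Lemma entry_swap_r a b c e : E a b c e = E a b e c.
Proof. rewrite /min4pc_entry (dist_sym e c); lia. Qed.

Lemma entry_sym a b c e : E a b c e = E c e a b.
Proof.
rewrite /min4pc_entry (dist_sym c b) (dist_sym e a) (dist_sym c a) (dist_sym e b); lia.
Qed.

Lemma entry_diag a b : E a b a b = 0.
Proof. rewrite /min4pc_entry !dist0; lia. Qed.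

Lemma entry_edges a b c e : adj a b -> adj c e -> [set a; b] != [set c; e] ->
  E a b c e = 2.
Proof.
move=> ab ce ne; rewrite /min4pc_entry (dist_adj ab) (dist_adj ce).
have pab : odd (D a a) (+) odd (D a b) by rewrite -dist_parity (dist_adj ab).
have pce : odd (D a c) (+) odd (D a e) by rewrite -dist_parity (dist_adj ce).
have p1 : ~~ odd (D a e + D b c).
  rewrite oddD (dist_parity a a e) (dist_parity a b c).
  by move: pab pce; case: (odd (D a a)); case: (odd (D a b)); case: (odd (D a c));
     case: (odd (D a e)).


have p2 : ~~ odd (D a c + D b e).
  rewrite oddD (dist_parity a a c) (dist_parity a b e).
  by move: pab pce; case: (odd (D a a)); case: (odd (D a b)); case: (odd (D a c));
     case: (odd (D a e)).
have h1 : (2 <= D a e + D b c)%N.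
  case: (ltnP (D a e + D b c) 2) => // lt.
  have z : (D a e + D b c = 0)%N.
    move: p1 lt; case: (D a e + D b c) => [|[|]] //.
  have E1 : a = e by apply: dist_eq0; lia.
  have E2 : b = c by apply: dist_eq0; lia.
  by move: ne; rewrite E1 E2 setUC eqxx.
have h2 : (2 <= D a c + D b e)%N.
  case: (ltnP (D a c + D b e) 2) => // lt.
  have z : (D a c + D b e = 0)%N.
    move: p2 lt; case: (D a c + D b e) => [|[|]] //.
  have E1 : a = c by apply: dist_eq0; lia.
  have E2 : b = e by apply: dist_eq0; lia.
  by move: ne; rewrite E1 E2 eqxx.
lia.
Qed.

Lemma entry_f i j a b : (1 < D i j)%N -> adj a b ->
  E i j a b = (D i j).-1 \/ E i j a b = (D i j).+1.
Proof.
move=> d1 ab; rewrite /min4pc_entry (dist_adj ab).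
have pab : odd (D i a) (+) odd (D i b) by rewrite -dist_parity (dist_adj ab).
have t1 := dist_tri i b a; have t2 := dist_tri b a j.
have t3 := dist_tri i a b; have t4 := dist_tri a b j.
rewrite (dist_adj ab) in t3 t4; rewrite sym in ab; rewrite (dist_adj ab) in t1 t2.
have q1 : D i b + D j a != D i j.
  apply/negP => /eqP h; have := congr1 odd h.
  rewrite oddD (dist_parity i j a) (dist_parity i i j).
  by move: pab; case: (odd (D i a)); case: (odd (D i b)); case: (odd (D i j));
     case: (odd (D i i)).
have q2 : D i a + D j b != D i j.
  apply/negP => /eqP h; have := congr1 odd h.
  rewrite oddD (dist_parity i j b) (dist_parity i i j).
  by move: pab; case: (odd (D i a)); case: (odd (D i b)); case: (odd (D i j));
     case: (odd (D i i)).
rewrite (dist_sym j a) (dist_sym j b) in q1 q2 *.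
move: q1 q2 => /eqP q1 /eqP q2.
rewrite (dist_sym b j) in t2; rewrite (dist_sym a j) in t4.
have t5 := dist_tri i a j; have t6 := dist_tri i b j.
lia.
Qed.


Lemma enum2 (p : {set V}) (x0 : V) : #|p| = 2 ->
  exists a b, [/\ p = [set a; b], nth x0 (enum p) 0 = a & nth x0 (enum p) 1 = b].
Proof.
move=> c; have := cardE p; rewrite c.
case Ee : (enum p) => [|a [|b [|]]] //= _.
exists a, b; split => //; apply/setP => z; rewrite -mem_enum Ee !inE.
by [].
Qed.

Lemma Min4PC_eq x0 p q a b c e : p = [set a; b] -> a != b -> q = [set c; e] -> c != e ->
  Min4PC adj x0 p q = E a b c e.
Proof.
move=> pE ab qE ce.
have cp : #|p| = 2 by rewrite pE cards2 ab.
have cq : #|q| = 2 by rewrite qE cards2 ce.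
have [a' [b' [pE' h1 h2]]] := enum2 x0 cp.
have [c' [e' [qE' h3 h4]]] := enum2 x0 cq.
rewrite /Min4PC h1 h2 h3 h4.
have [[-> ->]|[-> ->]] := set2_eq (etrans (esym pE') pE);
have [[-> ->]|[-> ->]] := set2_eq (etrans (esym qE') qE);
first [done | by rewrite entry_swap_l | by rewrite entry_swap_r | by rewrite entry_swap_l entry_swap_r].
Qed.

Lemma orient i j a b : (1 < D i j)%N -> adj a b -> E i j a b = (D i j).-1 ->
  exists a' b', [/\ [set a; b] = [set a'; b'], adj a' b' & (D i a' + D j b' = (D i j).-1)%N].
Proof.
move=> d1 ab; rewrite /min4pc_entry (dist_adj ab) => h.
case: (leqP (D i a + D j b) (D i b + D j a)) => c.
  exists a, b; split => //; lia.
exists b, a; rewrite setUC sym; split => //; lia.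
Qed.

Lemma geo_edge i j a b a' b' : (1 < D i j)%N -> adj a b -> adj a' b' ->
  (D i a + D j b = (D i j).-1)%N -> (D i a' + D j b' = (D i j).-1)%N ->
  D i a = D i a' -> a = a' /\ b = b'.
Proof.
move=> d1 ab ab' h h' ea.
have info : forall x y, adj x y -> (D i x + D j y = (D i j).-1)%N ->
    D i y = (D i x).+1 /\ D y j = (D i j - (D i x).+1)%N /\ D x j = (D i j - D i x)%N.
  move=> x y xy hxy.
  have s1 := dist_step i xy.
  have s2 := dist_tri i y j.
  have s3 := dist_tri i x j.
  have yx : adj y x by rewrite sym.
  have s4 := dist_step j yx.
  rewrite (dist_sym y j) (dist_sym x j) in s2 s3 *.
  lia.
have [i1 [i2 i3]] := info a b ab h; have [i4 [i5 i6]] := info a' b' ab' h'.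
split.
  apply: (@geo_uniq i j (D i j - D i a) (D i a)) => //; lia.
apply: (@geo_uniq i j (D i j - (D i a).+1) (D i a).+1) => //; lia.
Qed.

Lemma kappa_eq i (p : {set V}) x y : p = [set x; y] -> x != y ->
  minn (D i (nth i (enum p) 0)) (D i (nth i (enum p) 1)) = minn (D i x) (D i y).
Proof.
move=> pE xy; have cp : #|p| = 2 by rewrite pE cards2 xy.
have [a [b [pE' -> ->]]] := enum2 i cp.
have [[-> ->]|[-> ->]] := set2_eq (etrans (esym pE') pE) => //; exact: minnC.
Qed.

Lemma orient_key i j a b : (1 < D i j)%N -> adj a b -> (D i a + D j b = (D i j).-1)%N ->
  D i b = (D i a).+1 /\ (D i a < D i j)%N.
Proof.
move=> d1 ab h.
have s1 := dist_step i ab; have s2 := dist_tri i b j.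
rewrite (dist_sym b j) in s2; lia.
Qed.

Lemma iter_mulE (R : comNzRingType) n (x : R) : iter n (GRing.mul x) 1%R = (x ^+ n)%R.
Proof. by elim: n => [|n IH] //=; rewrite IH exprS. Qed.

Lemma twoB (i j : V) : i != j -> forall p, p \in [set i; j] |: edges adj ->
  exists x y, x != y /\ p = [set x; y].
Proof.
move=> ij p; rewrite in_setU1 => /orP [/eqP ->|/edgesP [x [y [xy ->]]]].
  by exists i, j.
exists x, y; split => //; apply/eqP => E; by move: xy; rewrite E irr.
Qed.

Local Open Scope ring_scope.

Lemma final (R : realType) (i j : V) : (1 < D i j)%N ->
  let B := [set i; j] |: edges adj in
  exists s : seq R,
    eigenvalues_are (Min4PC_sub R adj i B) s /\
    count (fun x => x < 0) s = (#|V| - 1)%N /\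
    count (fun x => 0 < x) s = 1%N.
Proof.
move=> d1 B.
set f := [set i; j].
have ij : i != j by apply/eqP => E; move: d1; rewrite E dist0.
have fnE : f \notin edges adj.
  apply/negP => /edgesP [x [y [xy fE]]].
  have [[E1 E2]|[E1 E2]] := set2_eq fE; subst x y.
  - by move: d1; rewrite (dist_adj xy).
  - by move: d1; rewrite dist_sym (dist_adj xy).
have fB : f \in B by rewrite /B setU11.
have cB : #|B| = #|V|.
  rewrite /B cardsU1 fnE cardEd.
  have := max_card (pred1 i); rewrite card1; lia.
have dlt := dist_lt i j.
have n3 : (2 < #|B|)%N by rewrite cB; lia.
set f0 := enum_rank_in fB f.
have ef0 : enum_val f0 = f by rewrite /f0 enum_rankK_in.
set v := fun a : 'I_#|B| => if a == f0 then 0 else (Min4PC adj i f (enum_val a))%:R : R.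
have hv : v f0 = 0 by rewrite /v eqxx.
have valB : forall a : 'I_#|B|, a != f0 -> exists x y, adj x y /\ enum_val a = [set x; y].
  move=> a af; case/setU1P: (enum_valP a) => [E|]; last exact: edgesP.
  by exfalso; move/eqP: af; apply; rewrite -(enum_valK_in fB a) E.
have two : forall a : 'I_#|B|, exists x y, x != y /\ enum_val a = [set x; y].
  by move=> a; apply: (twoB ij); exact: enum_valP.
have vals : forall a, a != f0 ->
    Min4PC adj i f (enum_val a) = (D i j).-1 \/ Min4PC adj i f (enum_val a) = (D i j).+1.
  move=> a af; have [x [y [xy ->]]] := valB a af.
  rewrite (@Min4PC_eq i f _ i j x y) //; last by apply/eqP => E; move: xy; rewrite E irr.
  exact: entry_f.
have neq : forall x y, adj x y -> x != y.
  by move=> x y xy; apply/eqP => E; move: xy; rewrite E irr.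
have Msym : forall p q : 'I_#|B|, Min4PC adj i (enum_val p) (enum_val q) =
    Min4PC adj i (enum_val q) (enum_val p).
  move=> p q; have [x [y [xy ->]]] := two p; have [z [w [zw ->]]] := two q.
  by rewrite (Min4PC_eq i (erefl _) xy (erefl _) zw) (Min4PC_eq i (erefl _) zw (erefl _) xy)
     entry_sym.
have ME : Min4PC_sub R adj i B = @NN R #|B| f0 v.
  apply/matrixP => a b; rewrite !mxE.
  case: (eqVneq a b) => [<-|ab].
    have [x [y [xy ->]]] := two a.
    by rewrite (Min4PC_eq i (erefl _) xy (erefl _) xy) entry_diag.
  case: (eqVneq a f0) => [af|af].
    have bf : b != f0 by rewrite -af eq_sym.
    by rewrite /v af ef0 (negbTE bf).
  case: (eqVneq b f0) => [bf|bf].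
    by rewrite /v Msym bf ef0 (negbTE af).
  have [x [y [xy Ea]]] := valB a af; have [z [w [zw Eb]]] := valB b bf.
  rewrite Ea Eb (Min4PC_eq i (erefl _) (neq _ _ xy) (erefl _) (neq _ _ zw)).
  rewrite entry_edges //; rewrite -Ea -Eb.
  by apply/negP => /eqP /enum_val_inj E; move: ab; rewrite E eqxx.
have [d2 Ed] : exists d2, D i j = d2.+2 by exists (D i j).-2; lia.
set Sset := [set a : 'I_#|B| | (a != f0) && (Min4PC adj i f (enum_val a) == (D i j).-1)].
set kap := fun a : 'I_#|B| =>
  minn (D i (nth i (enum (enum_val a)) 0)) (D i (nth i (enum (enum_val a)) 1)).
have Sspec : forall a, a \in Sset -> exists a' b', [/\ enum_val a = [set a'; b'], adj a' b',
    (D i a' + D j b' = (D i j).-1)%N & kap a = D i a'].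
  move=> a; rewrite inE => /andP [af /eqP h].
  have [x [y [xy Ea]]] := valB a af.
  rewrite Ea (Min4PC_eq i (erefl _) ij (erefl _) (neq _ _ xy)) in h.
  have [a' [b' [E1 ab' h']]] := orient d1 xy h.
  exists a', b'; split => //; first by rewrite Ea.
  have [k1 k2] := orient_key d1 ab' h'.
  rewrite /kap (kappa_eq i (etrans Ea E1) (neq _ _ ab')) k1; lia.
have Kle : (#|Sset| <= D i j)%N.
  have kinj : {in Sset &, injective kap}.
    move=> a1 a2 h1 h2 ek.
    have [x1 [y1 [E1 xy1 s1 k1]]] := Sspec a1 h1.
    have [x2 [y2 [E2 xy2 s2 k2]]] := Sspec a2 h2.
    have [e1 e2] := geo_edge d1 xy1 xy2 s1 s2 (etrans (esym k1) (etrans ek k2)).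
    by apply: enum_val_inj; rewrite E1 E2 e1 e2.
  have klt : forall a, a \in Sset -> (kap a < d2.+2)%N.
    move=> a h; have [x [y [_ xy s1 ->]]] := Sspec a h.
    by have [_ ] := orient_key d1 xy s1; rewrite Ed.
  pose phi := fun a : 'I_#|B| => (inord (kap a) : 'I_d2.+2).
  have pinj : {in Sset &, injective phi}.
    move=> a1 a2 h1 h2 /(congr1 (@nat_of_ord _)); rewrite /phi !inordK ?klt //.
    exact: kinj.
  rewrite -(card_in_imset pinj) Ed.
  by have := max_card (mem (phi @: Sset)); rewrite card_ord.
set K := #|Sset|.
pose ch := @chi R #|B| f0.
have tt0 : forall a, a \in Sset -> a != f0 by move=> a; rewrite inE => /andP [].
have vE : forall a, v a = (d2.+3)%:R * ch a - 2 * (if a \in Sset then 1 else 0).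
  move=> a; rewrite /v /ch /chi; case: (eqVneq a f0) => [->|af].
    have -> : (f0 \in Sset) = false by apply/negP => /tt0; rewrite eqxx.
    by rewrite !mulr0 subr0.
  rewrite /Sset inE af /=.
  case: (vals a af) => E0; rewrite E0.
    case: ifP => [_|/eqP //].
    by rewrite Ed /= !mulrS; ring.
  case: ifP => [/eqP|_]; first lia.
  by rewrite Ed /= !mulrS; ring.
have v2E : forall a, v a ^+ 2 = (d2.+3)%:R ^+ 2 * ch a - 4 * (d2.+2)%:R * (if a \in Sset then 1 else 0).
  move=> a; rewrite vE /ch /chi; case: (eqVneq a f0) => [->|af].
    have -> : (f0 \in Sset) = false by apply/negP => /tt0; rewrite eqxx.
    by ring.
  case: (_ \in Sset); rewrite !mulrS; ring.
have sch : \sum_a ch a = (#|B|.-1)%:R.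
  rewrite (eq_bigr (fun a => 1 - @ef R #|B| f0 a)); last first.
    by move=> a _; rewrite /ch /chi /ef; case: (a == f0); ring.
  by rewrite sumrB sum_1 sum_ef -subn1 natrB //; lia.
have stt : \sum_a (if a \in Sset then 1 else 0 : R) = K%:R.
  by rewrite -big_mkcond /= sumr_const.
set mm : R := (#|B|.-1)%:R.
set dd : R := (d2.+2)%:R.
set kk : R := K%:R.
have SE : \sum_a v a = (dd + 1) * mm - 2 * kk.
  rewrite (eq_bigr _ (fun a _ => vE a)) sumrB -!mulr_sumr sch stt.
  by rewrite /dd /mm /kk !mulrS; ring.
have WE : \sum_a v a ^+ 2 = (dd + 1) ^+ 2 * mm - 4 * dd * kk.
  rewrite (eq_bigr _ (fun a _ => v2E a)) sumrB -!mulr_sumr sch stt.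
  by rewrite /dd /mm /kk !mulrS; ring.
have dd2 : 2 <= dd by rewrite /dd ler_nat.
have kkd : kk <= dd by rewrite /kk /dd ler_nat -Ed.
have kk0 : 0 <= kk by rewrite /kk ler0n.
have ddm : dd <= mm.
  rewrite /dd /mm ler_nat -Ed; rewrite cB in n3 *; lia.
have cp := @charNN_gen R #|B| f0 v n3 hv.
rewrite -/mm SE WE in cp.
have Hc := @cubic R (2 - 2 * mm) ((dd + 1) ^+ 2 * mm - 4 * dd * kk)
   (2 * ((dd + 1) * mm - 2 * kk) ^+ 2); rewrite /= in Hc.
set Q := (('X + 2%:P) * ('X + (2 - 2 * mm)%:P) * 'X -
    ((dd + 1) ^+ 2 * mm - 4 * dd * kk)%:P * ('X + (2 - 2 * mm)%:P) -
    (2 * ((dd + 1) * mm - 2 * kk) ^+ 2)%:P) in Hc cp.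
have Hq1 : 0 <= Q.[-2].
  have -> : Q.[-2] = 8 * kk * (mm - kk) by rewrite /Q !(hornerD, hornerN, hornerM, hornerX, hornerC); ring.
  apply: mulr_ge0; [apply: mulr_ge0|]; lra.
have Hq2 : Q.[0] < 0.
  have -> : Q.[0] = - 2 * (mm * (dd - 1) ^+ 2 + 4 * ((dd - kk) * (mm - kk))).
    by rewrite /Q !(hornerD, hornerN, hornerM, hornerX, hornerC); ring.
  have H1 : 0 < mm * (dd - 1) ^+ 2 by apply: mulr_gt0; [lra | apply: exprn_gt0; lra].
  have H2 : 0 <= (dd - kk) * (mm - kk) by apply: mulr_ge0; lra.
  lra.
have [r1 [r2 [r3 [h1 h2 h3 qE]]]] := Hc Hq1 Hq2.
exists (nseq (#|B| - 3) (-2) ++ [:: r1; r2; r3]); split.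
  rewrite /eigenvalues_are ME cp qE big_cat big_nseq iter_mulE /= !big_cons big_nil mulr1.
  by rewrite polyCN opprK !mulrA.
rewrite !count_cat !count_nseq /= h1 h2 (lt_gtF h3) h3 (lt_gtF h1) (lt_gtF h2).
have n2 : (-2 : R) < 0 by lra.
have p2 : ((0 : R) < -2) = false by apply/negbTE; rewrite -leNgt; lra.
rewrite n2 p2 /=.
have n3' : (2 < #|V|)%N by rewrite -cB.
rewrite cB; move: n3'; clear => h; rewrite /nat_of_bool !mul1n !mul0n !add0n !addn0; split => //; case: #|V| h => [|[|[|k]]] // _; by rewrite !subSS !subn0 addn2.
Qed.


End Tree.

Local Open Scope ring_scope.

Theorem theorem3p1 (R : realType) (V : finType) (adj : rel V) (i j : V) :
  is_tree adj ->
  (1 < dist adj i j)%N ->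
  let B := [set i; j] |: edges adj in
  exists s : seq R,
    eigenvalues_are (Min4PC_sub R adj i B) s /\
    count (fun x => x < 0) s = (#|V| - 1)%N /\
    count (fun x => 0 < x) s = 1%N.
Proof.
move=> [sym [irr [conn cE]]].
exact: final.
Qed.
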